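(* Let $n\ge3$, let the sites of an $n$-qubit chain be partitioned into nonempty consecutive intervals $L=\{1,\dots,a\}$, $C=\{a+1,\dots,a+k\}$, $R=\{a+k+1,\dots,n\}$, let $U$ be a Clifford unitary on the chain with symplectic matrix $W$, and suppose $W$ satisfies the left wall condition around $C$. If $G_{\mathrm{left}}\cap G_{\mathrm{right}}\neq\{0\}$, then there exist an operator $Q_C$ on the qubits of $C$ that is not proportional to the identity and a real number $\theta$ such that $Q=\mathbb{1}_L\otimes Q_C\otimes\mathbb{1}_R$ satisfies $UQU^\dagger=e^{i\theta}Q$ (a non-trivial local conserved, possibly phase-oscillating, quantity supported on $C$).
   Context: Pauli operators modulo phases are identified with $\mathbb{Z}_2^{2n}$ via $(p_1,q_1,\dots,p_n,q_n)\mapsto X^{p_1}Z^{q_1}\otimes\cdots\otimes X^{p_n}Z^{q_n}$; symplectic form $J=\bigoplus_{i=1}^n\begin{pmatrix}0&1\\1&0\end{pmatrix}$; a Clifford unitary $U$ induces $W\in\mathrm{Sp}(2n,\mathbb{Z}_2)$ (i.e. $WJW^T=J$) with $UP_bU^\dagger\propto P_{Wb}$. $V_S$ denotes vectors supported on the site set $S$, $\mathbb{Z}_2^{2n}=V_L\oplus V_C\oplus V_R$, vectors $(l,c,r)$, and $\pi_C$ the projection onto $V_C$. Left wall condition: for all $t\ge1$, $l\in V_L$: $W^t(l,0,0)\in V_L\oplus V_C\oplus\{0\}$. Internal subspaces: $G_{\mathrm{left}}=\pi_C\big(\mathrm{span}\{W^t(l,0,0):t\ge0,\ l\in V_L\}\big)$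 and $G_{\mathrm{right}}=\pi_C\big(\mathrm{span}\{W^t(0,0,r):t\ge0,\ r\in V_R\}\big)$. *)

(* Defs.v *)
From HB Require Import structures.
From mathcomp Require Import all_boot all_order all_algebra.
From mathcomp Require Import complex.
From mathcomp Require Import reals trigo.
Set Implicit Arguments. Unset Strict Implicit. Unset Printing Implicit Defensive.
Import Order.TTheory GRing.Theory Num.Theory.
Local Open Scope ring_scope.

Definition bstate (m : nat) := {ffun 'I_m -> bool}.
Definition op (R : rcfType) (m : nat) := bstate m -> bstate m -> R[i].

Definition op_mul (R : rcfType) m (A B : op R m) : op R m :=
  fun x y => \sum_(z : bstate m) A x z * B z y.
Definition op_adj (R : rcfType) m (A : op R m) : op R m :=
  fun x y => (A y x)^*.
Definition op_id (R : rcfType) m : op R m := fun x y => (x == y)%:R.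
Arguments op_id R m : clear implicits.
Definition op_scale (R : rcfType) m (c : R[i]) (A : op R m) : op R m :=
  fun x y => c * A x y.
Definition unitary (R : rcfType) m (U : op R m) : Prop :=
  op_mul U (op_adj U) = op_id R m /\ op_mul (op_adj U) U = op_id R m.

(* ---------- Z_2^{2n}: column vectors over F_2, coordinates (p_1,q_1,...,p_n,q_n) ---------- *)
Definition F2vec (n : nat) := 'cV['F_2]_(2 * n).
Definition F2mat (n : nat) := 'M['F_2]_(2 * n).

Lemma pidx_lt n (i : 'I_n) : (2 * i < 2 * n)%N.
Proof. by rewrite ltn_pmul2l. Qed.
Lemma qidx_lt n (i : 'I_n) : ((2 * i).+1 < 2 * n)%N.
Proof.
have hi := ltn_ord i. rewrite -addn1.
have -> : (2 * n = 2 * i + 2 * (n - i))%N by rewrite -mulnDr subnKC // ltnW.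
rewrite ltn_add2l; case: (n - i)%N (subn_gt0 i n) => [|m]; rewrite ?hi //.
by move=> _; rewrite mulnS.
Qed.
Definition pidx n (i : 'I_n) : 'I_(2 * n) := Ordinal (pidx_lt i).
Definition qidx n (i : 'I_n) : 'I_(2 * n) := Ordinal (qidx_lt i).

(* Pauli operator P_b = X^{p_1}Z^{q_1} (x) ... (x) X^{p_n}Z^{q_n};
   single-site matrix element <x| X^p Z^q |y> = [x = y xor p] (-1)^(q y). *)
Definition pauli (R : rcfType) n (b : F2vec n) : op R n :=
  fun x y => \prod_(i < n)
    ((x i == (y i (+) (b (pidx i) 0 != 0)))%:R *
     (-1) ^+ ((b (qidx i) 0 != 0) && y i)).

Arguments pauli R {n} b.

(* symplectic form J = direct sum of [[0,1],[1,0]] *)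
Definition symJ n : F2mat n :=
  \matrix_(i, j) ((i %/ 2 == j %/ 2)%N && (i != j))%:R.
Definition symplectic n (W : F2mat n) : Prop := W *m symJ n *m W^T = symJ n.

Definition induces (R : rcfType) n (U : op R n) (W : F2mat n) : Prop :=
  forall b : F2vec n, exists c : R[i],
    op_mul (op_mul U (pauli R b)) (op_adj U) = op_scale c (pauli R (W *m b)).
Definition clifford_with (R : rcfType) n (U : op R n) (W : F2mat n) : Prop :=
  unitary U /\ symplectic W /\ induces U W.

(* ---------- Sites (0-based): L = [0,a), C = [a,a+k), R = [a+k,n) ---------- *)
Definition siteL (a : nat) (s : nat) : bool := (s < a)%N.
Definition siteC (a k : nat) (s : nat) : bool := ((a <= s) && (s < a + k))%N.
Definition siteR (a k : nat) (s : nat) : bool := (a + k <= s)%N.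

Definition supported n (S : pred nat) (v : F2vec n) : Prop :=
  forall j : 'I_(2 * n), ~~ S (j %/ 2)%N -> v j 0 = 0.
Definition projC n (a k : nat) (v : F2vec n) : F2vec n :=
  \col_j (if siteC a k (j %/ 2)%N then v j 0 else 0).

Definition in_span n (P : F2vec n -> Prop) (x : F2vec n) : Prop :=
  exists s : seq ('F_2 * F2vec n),
    (forall p, p \in s -> P p.2) /\ x = \sum_(p <- s) p.1 *: p.2.

Definition left_wall n (a k : nat) (W : F2mat n) : Prop :=
  forall t : nat, (0 < t)%N -> forall l : F2vec n, supported (siteL a) l ->
    supported (fun s => siteL a s || siteC a k s) (W ^+ t *m l).

Definition G_left n (a k : nat) (W : F2mat n) (g : F2vec n) : Prop :=
  exists x, in_span (fun v => exists (t : nat) (l : F2vec n),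
                       supported (siteL a) l /\ v = W ^+ t *m l) x
            /\ g = projC a k x.
Definition G_right n (a k : nat) (W : F2mat n) (g : F2vec n) : Prop :=
  exists x, in_span (fun v => exists (t : nat) (r : F2vec n),
                       supported (siteR a k) r /\ v = W ^+ t *m r) x
            /\ g = projC a k x.

Definition csite (a k r : nat) (j : 'I_k) : 'I_(a + k + r) := lshift r (rshift a j).
Arguments csite : clear implicits.
Definition restrC (a k r : nat) (x : bstate (a + k + r)) : bstate k :=
  [ffun j => x (csite a k r j)].
Arguments csite : clear implicits.
Arguments restrC : clear implicits.
Definition embedC (R : rcfType) (a k r : nat) (QC : op R k) : op R (a + k + r) :=
  fun x y => QC (restrC a k r x) (restrC a k r y) *
             \prod_(s < a + k + r | ~~ siteC a k s) (x s == y s)%:R.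

Arguments embedC R a k r QC : clear implicits.
Definition expi (R : realType) (theta : R) : R[i] := Complex (cos theta) (sin theta).

(* Main.v *)
Require Import Defs.
From HB Require Import structures.
From mathcomp Require Import all_boot all_order all_algebra.
From mathcomp Require Import complex.
From mathcomp Require Import reals trigo.
From mathcomp Require Import zify ring lra.
From Stdlib Require Import FunctionalExtensionality.
Import Order.TTheory GRing.Theory Num.Theory.
Local Open Scope ring_scope.
Set Implicit Arguments. Unset Strict Implicit. Unset Printing Implicit Defensive.


Definition prt (m : nat) : nat := if odd m then m.-1 else m.+1.

Lemma prt_lt n (i : 'I_(2 * n)) : (prt i < 2 * n)%N.
Proof.
have hi := ltn_ord i; rewrite /prt; have := modn2 i.
case: (odd i) => /= h; lia.
Qed.

Definition sgm n (i : 'I_(2 * n)) : 'I_(2 * n) := Ordinal (prt_lt i).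

Lemma prt_spec (m : nat) :
  ((m %% 2 = 1)%N /\ prt m = m.-1) \/ ((m %% 2 = 0)%N /\ prt m = m.+1).
Proof. rewrite /prt; have := modn2 m; case: (odd m) => /= h; [left|right]; by []. Qed.

Lemma sig_cond n (i j : 'I_(2 * n)) :
  ((i %/ 2 == j %/ 2)%N && (i != j)) = (j == sgm i).
Proof.
have hs : nat_of_ord (sgm i) = prt i by [].
have [[h hp]|[h hp]] := prt_spec i; rewrite hp in hs;
apply/idP/idP.
- move=> /andP[/eqP h1 /eqP h2]; apply/eqP/ord_inj; rewrite hs.
  have h3 : ((i : nat) <> j) by move=> e; apply: h2; exact: ord_inj.
  lia.
- move/eqP => ->; rewrite hs; apply/andP; split; first by apply/eqP; lia.
  apply/eqP => e; have := congr1 (@nat_of_ord _) e; rewrite hs; lia.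
- move=> /andP[/eqP h1 /eqP h2]; apply/eqP/ord_inj; rewrite hs.
  have h3 : ((i : nat) <> j) by move=> e; apply: h2; exact: ord_inj.
  lia.
- move/eqP => ->; rewrite hs; apply/andP; split; first by apply/eqP; lia.
  apply/eqP => e; have := congr1 (@nat_of_ord _) e; rewrite hs; lia.
Qed.

Lemma sigK n : involutive (@sgm n).
Proof.
move=> i; apply/ord_inj; rewrite /=.
have [[h hp]|[h hp]] := prt_spec i; rewrite hp;
have [[h' hp']|[h' hp']] := prt_spec (if odd i then i.-1 else i.+1);
move: h' hp'; rewrite -/(prt i) hp => h' ->; lia.
Qed.

Lemma sig_div n (i : 'I_(2 * n)) : (sgm i %/ 2 = i %/ 2)%N.
Proof.
have hs : nat_of_ord (sgm i) = prt i by [].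
rewrite hs; have [[h ->]|[h ->]] := prt_spec i; lia.
Qed.

Lemma symJE n (i j : 'I_(2 * n)) : symJ n i j = (j == sgm i)%:R.
Proof. by rewrite /symJ mxE sig_cond. Qed.

Lemma sum_delta (T : finType) (R : pzSemiRingType) (c : T) (F : T -> R) :
  \sum_(k : T) (k == c)%:R * F k = F c.
Proof.
rewrite (bigD1 c) //= eqxx mul1r big1 ?addr0 // => k /negbTE ->.
by rewrite mul0r.
Qed.

Lemma sum_delta' (T : finType) (R : pzSemiRingType) (c : T) (F : T -> R) :
  \sum_(k : T) F k * (k == c)%:R = F c.
Proof.
rewrite (bigD1 c) //= eqxx mulr1 big1 ?addr0 // => k /negbTE ->.
by rewrite mulr0.
Qed.

Lemma symJ_sym n : (symJ n)^T = symJ n.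
Proof.
apply/matrixP => i j; rewrite mxE !symJE.
have -> : (i == sgm j) = (j == sgm i); last by [].
by apply/eqP/eqP => [->|->]; rewrite sigK.
Qed.

Lemma symJ2 n : symJ n *m symJ n = 1%:M.
Proof.
apply/matrixP => i j; rewrite !mxE.
under eq_bigr => k _ do rewrite !symJE.
rewrite sum_delta sigK eq_sym.
by [].
Qed.

Lemma sympl_unit n (W : F2mat n) : symplectic W ->
  W \in unitmx /\ W^T *m symJ n *m W = symJ n.
Proof.
move=> hW; set J := symJ n.
have h1 : W *m (J *m W^T *m J) = 1%:M by rewrite !mulmxA hW symJ2.
split; first by case: (mulmx1_unit h1).
have h2 := mulmx1C h1.
have : J *m (J *m W^T *m J *m W) = J by rewrite h2 mulmx1.
by rewrite !mulmxA symJ2 mul1mx.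
Qed.

Lemma exprSmx n (W : F2mat n) t (u : F2vec n) : W ^+ t.+1 *m u = W *m (W ^+ t *m u).
Proof. by rewrite exprS -mulmxE mulmxA. Qed.

Lemma exprDmx n (W : F2mat n) s t (u : F2vec n) : W ^+ (s + t) *m u = W ^+ s *m (W ^+ t *m u).
Proof. by rewrite exprD -mulmxE mulmxA. Qed.

Lemma expr0mx n (W : F2mat n) (u : F2vec n) : W ^+ 0 *m u = u.
Proof. by rewrite expr0; exact: mul1mx. Qed.

Lemma cancel_pow n (W : F2mat n) i p (A B : 'M['F_2]_(2 * n, p)) : W \in unitmx ->
  W ^+ i *m A = W ^+ i *m B -> A = B.
Proof.
move=> hu; elim: i => [|i IH].
  by rewrite expr0 -[1]/(1%:M : F2mat n) !mul1mx.
rewrite exprS -!mulmxE -!mulmxA => h; apply: IH.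
by rewrite -(mulKmx hu (W ^+ i *m A)) h mulKmx.
Qed.

Lemma W_order n (W : F2mat n) : W \in unitmx -> exists N, (0 < N)%N /\ W ^+ N = 1.
Proof.
move=> hu.
pose f := fun i : 'I_(#|{: F2mat n}|.+1) => W ^+ i.
have : ~~ injectiveb f.
  apply/negP => /injectiveP hi; have := @leq_card _ _ f hi.
  by rewrite card_ord ltnn.
move/injectivePn => [i [j hij hf]].
wlog lt : i j hij hf / (i < j)%N.
  move=> H; case: (ltngtP i j) => h; first exact: (H i j).
  - by apply: (H j i) => //; rewrite eq_sym.
  - by move: hij; rewrite (ord_inj h) eqxx.
exists (j - i)%N; split; first by rewrite subn_gt0.
apply: (@cancel_pow n W i) => //.
rewrite mulmxE -exprD subnKC ?(ltnW lt) // mulr1.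
by rewrite /f in hf; rewrite hf.
Qed.

Definition bf n (u v : F2vec n) : 'F_2 := (u^T *m symJ n *m v) 0 0.

Lemma bfE n (u v : F2vec n) : bf u v = \sum_i u i 0 * v (sgm i) 0.
Proof.
rewrite /bf mxE.
under eq_bigr => k _ do rewrite mxE big_distrl /=.
rewrite exchange_big /=; apply: eq_bigr => i _.
under eq_bigr => k _ do rewrite mxE symJE -mulrA.
by rewrite -big_distrr /= sum_delta.
Qed.

Lemma bfW n (W : F2mat n) t (u v : F2vec n) : symplectic W ->
  bf (W ^+ t *m u) (W ^+ t *m v) = bf u v.
Proof.
move=> /sympl_unit [_ hW]; elim: t => [|t IH]; first by rewrite !expr0mx.
rewrite !exprSmx -IH /bf; congr (_ 0 0).
by rewrite trmx_mul -!mulmxA (mulmxA W^T) (mulmxA _ W) hW.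
Qed.

Section Supp.
Variable n : nat.
Implicit Types (u v w : F2vec n) (S : pred nat).

Lemma supp0 S : supported S (0 : F2vec n).
Proof. by move=> j _; rewrite mxE. Qed.

Lemma suppD S u v : supported S u -> supported S v -> supported S (u + v).
Proof. by move=> hu hv j hj; rewrite mxE hu // hv // addr0. Qed.

Lemma suppN S u : supported S u -> supported S (- u).
Proof. by move=> hu j hj; rewrite mxE hu // oppr0. Qed.

Lemma suppB S u v : supported S u -> supported S v -> supported S (u - v).
Proof. by move=> hu hv; apply: suppD => //; apply: suppN. Qed.

Lemma suppZ S c u : supported S u -> supported S (c *: u).
Proof. by move=> hu j hj; rewrite mxE hu // mulr0. Qed.

Lemma supp_sum S (s : seq ('F_2 * F2vec n)) (f : F2vec n -> F2vec n) :
  (forall p, p \in s -> supported S (f p.2)) ->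
  supported S (\sum_(p <- s) p.1 *: f p.2).
Proof.
elim: s => [|p s IH] h; first by rewrite big_nil; apply: supp0.
rewrite big_cons; apply: suppD.
  by apply: suppZ; apply: h; rewrite inE eqxx.
by apply: IH => q hq; apply: h; rewrite inE hq orbT.
Qed.

Lemma supp_sum_id S (s : seq ('F_2 * F2vec n)) :
  (forall p, p \in s -> supported S p.2) ->
  supported S (\sum_(p <- s) p.1 *: p.2).
Proof. exact: (@supp_sum S s id). Qed.

Lemma supp_sub S S' u : (forall s, S s -> S' s) -> supported S u -> supported S' u.
Proof. move=> hS hu j hj; apply: hu; apply/negP => /hS; exact/negP. Qed.

Lemma bfDl u v w : bf (u + v) w = bf u w + bf v w.
Proof. by rewrite !bfE -big_split; apply: eq_bigr => i _; rewrite mxE mulrDl. Qed.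
Lemma bfDr u v w : bf w (u + v) = bf w u + bf w v.
Proof. by rewrite !bfE -big_split; apply: eq_bigr => i _; rewrite mxE mulrDr. Qed.
Lemma bfNl u w : bf (- u) w = - bf u w.
Proof. by rewrite !bfE -sumrN; apply: eq_bigr => i _; rewrite mxE mulNr. Qed.
Lemma bfNr u w : bf w (- u) = - bf w u.
Proof. by rewrite !bfE -sumrN; apply: eq_bigr => i _; rewrite mxE mulrN. Qed.
Lemma bfBl u v w : bf (u - v) w = bf u w - bf v w.
Proof. by rewrite bfDl bfNl. Qed.
Lemma bfBr u v w : bf w (u - v) = bf w u - bf w v.
Proof. by rewrite bfDr bfNr. Qed.
Lemma bfZl c u w : bf (c *: u) w = c * bf u w.
Proof. by rewrite !bfE big_distrr; apply: eq_bigr => i _; rewrite mxE -mulrA. Qed.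
Lemma bfZr c u w : bf w (c *: u) = c * bf w u.
Proof. by rewrite !bfE big_distrr; apply: eq_bigr => i _; rewrite mxE mulrCA. Qed.

Lemma bf_suml (s : seq ('F_2 * F2vec n)) (f : F2vec n -> F2vec n) w :
  bf (\sum_(p <- s) p.1 *: f p.2) w = \sum_(p <- s) p.1 * bf (f p.2) w.
Proof.
elim: s => [|p s IH]; first by rewrite !big_nil bfE big1 // => i _; rewrite mxE mul0r.
by rewrite !big_cons bfDl bfZl IH.
Qed.

Lemma bf_disj S S' u v : (forall s, S s -> S' s -> False) ->
  supported S u -> supported S' v -> bf u v = 0.
Proof.
move=> hd hu hv; rewrite bfE big1 // => i _.
case hi: (S (i %/ 2)%N).
  rewrite hv ?mulr0 // sig_div; apply/negP => h; exact: hd _ hi h.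
by rewrite hu ?mul0r // hi.
Qed.

Lemma bf_delta u (c : 'I_(2 * n)) : bf u (delta_mx c 0) = u (sgm c) 0.
Proof.
rewrite bfE.
under eq_bigr => i _ do rewrite mxE eqxx andbT.
have e : forall i, (sgm i == c) = (i == sgm c).
  by move=> i; apply/eqP/eqP => [<-|->]; rewrite sigK.
under eq_bigr => i _ do rewrite e.
exact: sum_delta'.
Qed.

Lemma supp_delta S (c : 'I_(2 * n)) : S (c %/ 2)%N -> supported S (delta_mx c 0 : F2vec n).
Proof.
move=> hc j hj; rewrite mxE; case e: (j == c); last by [].
by move: hj; rewrite (eqP e) hc.
Qed.

Lemma bf_suml_id (s : seq ('F_2 * F2vec n)) w :
  bf (\sum_(p <- s) p.1 *: p.2) w = \sum_(p <- s) p.1 * bf p.2 w.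
Proof. exact: (@bf_suml s id). Qed.

End Supp.

Definition projS n (S : pred nat) (v : F2vec n) : F2vec n :=
  \col_j (if S (j %/ 2)%N then v j 0 else 0).

Lemma projS_supp n S (v : F2vec n) : supported S (projS S v).
Proof. by move=> j hj; rewrite mxE (negbTE hj). Qed.

Lemma projC_supp n a k (v : F2vec n) : supported (siteC a k) (projC a k v).
Proof. by move=> j hj; rewrite mxE (negbTE hj). Qed.

Lemma decomp n a k (v : F2vec n) :
  v = projS (siteL a) v + projC a k v + projS (siteR a k) v.
Proof.
apply/matrixP => j z; rewrite ord1 !mxE /siteL /siteC /siteR.
set s := (j %/ 2)%N.
case: (ltnP s a) => h1 /=.
  by rewrite ifF ?ifF ?addr0 //; apply/negbTE; rewrite -ltnNge; apply: (leq_trans h1); apply: leq_addr.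
rewrite add0r; case: (ltnP s (a + k)) => h2 /=; first by rewrite addr0.
by rewrite add0r.
Qed.

Lemma decompLC n a k (v : F2vec n) : supported (fun s => siteL a s || siteC a k s) v ->
  v = projS (siteL a) v + projC a k v.
Proof.
move=> hv; have hR : projS (siteR a k) v = 0.
  apply/matrixP => j z; rewrite ord1 !mxE; case h: (siteR a k _); last by [].
  apply: hv; move: h; rewrite /siteL /siteC /siteR => h.
  apply/negP => /orP[h'|/andP[_ h']]; lia.
by rewrite {1}(decomp a k v) hR addr0.
Qed.

Section MainF2.
Variables (n a k N : nat) (W : F2mat n).
Hypotheses (hW : symplectic W) (hwall : left_wall a k W)
  (hN0 : (0 < N)%N) (hN : W ^+ N = 1).

Lemma wall0 t l : supported (siteL a) l ->
  supported (fun s => siteL a s || siteC a k s) (W ^+ t *m l).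
Proof.
case: t => [|t] hl; last by apply: hwall.
by rewrite expr0mx; apply: supp_sub hl => s ->.
Qed.

Lemma powN s' s (u : F2vec n) : W ^+ s *m u = W ^+ s' *m (W ^+ (s + N * s' - s') *m u).
Proof.
rewrite -exprDmx.
have -> : (s' + (s + N * s' - s') = s + N * s')%N.
  have : (s' <= N * s')%N by rewrite leq_pmull.
  lia.
by rewrite exprD exprM hN expr1n mulr1.
Qed.

Lemma Zp s' s r l : supported (siteR a k) r -> supported (siteL a) l ->
  bf (W ^+ s' *m r) (W ^+ s *m l) = 0.
Proof.
move=> hr hl; rewrite [W ^+ s *m l](powN s') bfW //.
apply: (bf_disj _ hr (wall0 _ hl)) => x.
rewrite /siteR /siteL /siteC => h1 /orP[h2|/andP[_ h2]]; lia.
Qed.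

Lemma F2part g : G_left a k W g -> forall t,
  supported (fun s => siteL a s || siteC a k s) (W ^+ t *m g).
Proof.
move=> [x0 [[s [hs ->]] ->]] t.
set x := \sum_(p <- s) _.
have hx : supported (fun s => siteL a s || siteC a k s) x.
  apply: supp_sum_id => p /hs [t' [l [hl ->]]]; exact: wall0.
have -> : projC a k x = x - projS (siteL a) x.
  by rewrite {2}(decompLC hx) addrC addKr.
rewrite mulmxBr; apply: suppB; last by apply: wall0; exact: projS_supp.
rewrite /x mulmx_sumr.
have -> : \sum_(p <- s) W ^+ t *m (p.1 *: p.2) = \sum_(p <- s) p.1 *: (W ^+ t *m p.2).
  by apply: eq_bigr => p _; rewrite scalemxAr.
apply: supp_sum => p /hs [t' [l [hl ->]]]; rewrite -exprDmx; exact: wall0.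
Qed.

Lemma F1p g : G_right a k W g -> forall s l, supported (siteL a) l ->
  bf g (W ^+ s *m l) = 0.
Proof.
move=> [y0 [[q [hq ->]] ->]] s l hl.
set y := \sum_(p <- q) _.
set b := W ^+ s *m l.
have hb : supported (fun s => siteL a s || siteC a k s) b by apply: wall0.
have hy : forall v, supported (siteL a) v -> bf y v = 0.
  move=> v hv.
  rewrite bf_suml_id big_seq big1 // => p /hq [t' [r [hr ->]]].
  by rewrite -[v](expr0mx W) Zp // mulr0.
have hyb : bf y b = 0.
  rewrite bf_suml_id big_seq big1 // => p /hq [t' [r [hr ->]]].
  by rewrite Zp // mulr0.
have dLC : forall s, siteL a s -> siteC a k s -> False.
  by move=> x; rewrite /siteL /siteC => h1 /andP[h2 _]; lia.
have dRC : forall s, siteR a k s -> siteC a k s -> False.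
  by move=> x; rewrite /siteR /siteC => h1 /andP[_ h2]; lia.
have dCL : forall s, siteC a k s -> siteL a s -> False.
  by move=> x h1 h2; exact: dLC h2 h1.
rewrite (decompLC hb) bfDr (bf_disj dCL (projC_supp _) (projS_supp _)) add0r.
have -> : projC a k y = y - projS (siteL a) y - projS (siteR a k) y.
  have e : forall x1 x2 x3 : F2vec n, x2 = (x1 + x2 + x3) - x1 - x3.
    by move=> x1 x2 x3; rewrite addrAC addrK [x1 + x2]addrC addrK.
  by rewrite {2}(decomp a k y) -e.
rewrite !bfBl (bf_disj dLC (projS_supp _) (projC_supp _)).
rewrite (bf_disj dRC (projS_supp _) (projC_supp _)) !subr0.
have -> : projC a k b = b - projS (siteL a) b.
  by rewrite {2}(decompLC hb) addrC addKr.
rewrite bfBr hyb hy ?subr0 //; exact: projS_supp.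
Qed.

Lemma orbitC g : G_left a k W g -> G_right a k W g -> forall t,
  supported (siteC a k) (W ^+ t *m g).
Proof.
move=> hl hr t j hj.
case hL: (siteL a (j %/ 2)%N); last first.
  by apply: (F2part hl t); rewrite hL (negbTE hj).
have hd : supported (siteL a) (delta_mx (sgm j) 0 : F2vec n).
  by apply: supp_delta; rewrite sig_div.
rewrite -{1}(sigK j) -bf_delta.
set M := (N * t - t)%N.
have -> : delta_mx (sgm j) 0 = W ^+ t *m (W ^+ M *m (delta_mx (sgm j) 0 : F2vec n)).
  rewrite -exprDmx.
  have -> : (t + M = N * t)%N.
    have : (t <= N * t)%N by rewrite leq_pmull.
    rewrite /M; lia.
  by rewrite exprM hN expr1n expr0mx.
by rewrite bfW // (F1p hr).
Qed.

End MainF2.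



Section Ops.
Variables (R : rcfType) (m : nat).
Implicit Types (A B D U : op R m).

Lemma op_ext A B : (forall x y, A x y = B x y) -> A = B.
Proof.
move=> h; apply: functional_extensionality => x.
by apply: functional_extensionality => y.
Qed.

Lemma op_mulA A B D : op_mul (op_mul A B) D = op_mul A (op_mul B D).
Proof.
apply: op_ext => x y; rewrite /op_mul.
under eq_bigr => z _ do rewrite big_distrl /=.
rewrite exchange_big /=; apply: eq_bigr => w _.
by rewrite big_distrr /=; apply: eq_bigr => z _; rewrite mulrA.
Qed.

Lemma op_mul1 A : op_mul (op_id R m) A = A.
Proof.
apply: op_ext => x y; rewrite /op_mul /op_id.
rewrite (bigD1 x) //= eqxx mul1r big1 ?addr0 // => z /negbTE.
by rewrite eq_sym => ->; rewrite mul0r.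
Qed.

Lemma op_mulr1 A : op_mul A (op_id R m) = A.
Proof.
apply: op_ext => x y; rewrite /op_mul /op_id.
rewrite (bigD1 y) //= eqxx mulr1 big1 ?addr0 // => z /negbTE ->.
by rewrite mulr0.
Qed.

Lemma op_adjM A B : op_adj (op_mul A B) = op_mul (op_adj B) (op_adj A).
Proof.
apply: op_ext => x y; rewrite /op_adj /op_mul rmorph_sum.
by apply: eq_bigr => z _; rewrite rmorphM mulrC.
Qed.

Lemma op_adjK A : op_adj (op_adj A) = A.
Proof. by apply: op_ext => x y; rewrite /op_adj conjCK. Qed.

Definition tr A : R[i] := \sum_x A x x.

Lemma tr_mulC A B : tr (op_mul A B) = tr (op_mul B A).
Proof.
rewrite /tr /op_mul exchange_big /=; apply: eq_bigr => x _.
by apply: eq_bigr => y _; rewrite mulrC.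
Qed.

Definition hs A B : R[i] := \sum_x \sum_y (A x y)^* * B x y.

Lemma hs_tr A B : hs A B = tr (op_mul (op_adj A) B).
Proof. by rewrite /hs /tr /op_mul /op_adj exchange_big. Qed.

Lemma hs_unitary U A B : unitary U ->
  hs (op_mul (op_mul U A) (op_adj U)) (op_mul (op_mul U B) (op_adj U)) = hs A B.
Proof.
move=> [h1 h2]; rewrite !hs_tr !op_adjM op_adjK.
rewrite !op_mulA -(op_mulA (op_adj U) U) h2 op_mul1.
rewrite tr_mulC !op_mulA h2 op_mulr1.
by [].
Qed.

Definition opsum p (f : 'I_p -> op R m) : op R m := fun x y => \sum_t f t x y.

Lemma op_mul_suml p (f : 'I_p -> op R m) B :
  op_mul (opsum f) B = opsum (fun t => op_mul (f t) B).
Proof.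
apply: op_ext => x y; rewrite /op_mul /opsum.
under eq_bigr => z _ do rewrite big_distrl /=.
by rewrite exchange_big.
Qed.

Lemma op_mul_sumr p (f : 'I_p -> op R m) A :
  op_mul A (opsum f) = opsum (fun t => op_mul A (f t)).
Proof.
apply: op_ext => x y; rewrite /op_mul /opsum.
under eq_bigr => z _ do rewrite big_distrr /=.
by rewrite exchange_big.
Qed.

Lemma op_mul_scalel c A B : op_mul (op_scale c A) B = op_scale c (op_mul A B).
Proof.
apply: op_ext => x y; rewrite /op_mul /op_scale big_distrr /=.
by apply: eq_bigr => z _; rewrite mulrA.
Qed.

Lemma op_mul_scaler c A B : op_mul A (op_scale c B) = op_scale c (op_mul A B).
Proof.
apply: op_ext => x y; rewrite /op_mul /op_scale big_distrr /=.
by apply: eq_bigr => z _; rewrite mulrCA.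
Qed.

Lemma hs_sumr p (f : 'I_p -> op R m) A : hs A (opsum f) = \sum_t hs A (f t).
Proof.
rewrite /hs /opsum.
under eq_bigr => x _ do under eq_bigr => y _ do rewrite big_distrr /=.
under eq_bigr => x _ do rewrite exchange_big /=.
by rewrite exchange_big.
Qed.

Lemma hs_scaler c A B : hs A (op_scale c B) = c * hs A B.
Proof.
rewrite /hs /op_scale big_distrr; apply: eq_bigr => x _.
by rewrite big_distrr; apply: eq_bigr => y _; rewrite mulrCA.
Qed.

Lemma hs_scalel c A B : hs (op_scale c A) B = c^* * hs A B.
Proof.
rewrite /hs /op_scale big_distrr; apply: eq_bigr => x _.
by rewrite big_distrr; apply: eq_bigr => y _; rewrite rmorphM -mulrA.
Qed.

Lemma hs_self0 A : hs A A = 0 -> forall x y, A x y = 0.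
Proof.
move=> h x y.
have ge0 : forall x y, 0 <= (A x y)^* * A x y.
  by move=> x0 y0; rewrite mulrC mul_conjC_ge0.
have h1 : forall x0, \sum_y (A x0 y)^* * A x0 y = 0.
  move=> x0; apply: (psumr_eq0P _ h) => //= x1 _.
  by apply: sumr_ge0 => y1 _; exact: ge0.
have h2 : (A x y)^* * A x y = 0.
  by apply: (psumr_eq0P _ (h1 x)) => //= y1 _; exact: ge0.
by move/eqP: h2; rewrite mulrC mul_conjC_eq0 => /eqP.
Qed.

End Ops.



Lemma F2_neq0_eq (x y : 'F_2) : ((x != 0) == (y != 0)) = (x == y).
Proof. by case: x => [[|[|?]] hx]; case: y => [[|[|?]] hy]. Qed.

Lemma idx_cover m (j : 'I_(2 * m)) : exists i : 'I_m, j = pidx i \/ j = qidx i.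
Proof.
have hj := ltn_ord j.
have hi : (j %/ 2 < m)%N by lia.
exists (Ordinal hi); have := modn2 j; case: (odd j) => /= h; [right|left];
apply: ord_inj => /=; lia.
Qed.

Section Pauli.
Variables (R : rcfType).

Definition Fs (p q a c : bool) : R[i] := (a == (c (+) p))%:R * (-1) ^+ (q && c).

Lemma Fs_conj p q a c : (Fs p q a c)^* = Fs p q a c.
Proof. by rewrite /Fs rmorphM rmorph_nat rmorphXn rmorphN1. Qed.

Definition pb m (b : F2vec m) (i : 'I_m) : bool := b (pidx i) 0 != 0.
Definition qb m (b : F2vec m) (i : 'I_m) : bool := b (qidx i) 0 != 0.

Lemma pauliE m (b : F2vec m) x y :
  pauli R b x y = \prod_i Fs (pb b i) (qb b i) (x i) (y i).
Proof. by []. Qed.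

Lemma Fs_sum p q p' q' :
  \sum_(a : bool) \sum_(c : bool) Fs p q a c * Fs p' q' a c =
  ((p == p') && (q == q'))%:R * 2.
Proof.
rewrite /Fs.
by case: p; case: q; case: p'; case: q'; rewrite !big_bool /= ?expr0 ?expr1; ring.
Qed.


Lemma hs_pauli m (u w : F2vec m) :
  hs (pauli R u) (pauli R w) =
  \prod_(i < m) (((pb u i == pb w i) && (qb u i == qb w i))%:R * 2).
Proof.
rewrite /hs.
under eq_bigr => x _ do under eq_bigr => y _ do
  rewrite !pauliE rmorph_prod -big_split /=.
under eq_bigr => x _ do under eq_bigr => y _ do
  under eq_bigr => i _ do rewrite Fs_conj.
under eq_bigr => x _ do rewrite -(bigA_distr_bigA (fun i c => Fs (pb u i) (qb u i) (x i) c * Fs (pb w i) (qb w i) (x i) c)) /=.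
rewrite -(bigA_distr_bigA (fun i a => \sum_c Fs (pb u i) (qb u i) a c * Fs (pb w i) (qb w i) a c)) /=.
by apply: eq_bigr => i _; rewrite Fs_sum.
Qed.

Lemma hs_pauli_same m (u : F2vec m) : hs (pauli R u) (pauli R u) = 2 ^+ m.
Proof.
rewrite hs_pauli.
under eq_bigr => i _ do rewrite !eqxx mul1r.
by rewrite prodr_const card_ord.
Qed.

Lemma two_pow_neq0 m : (2 ^+ m : R[i]) != 0.
Proof. by rewrite expf_eq0 pnatr_eq0 andbF. Qed.

Lemma hs_pauli_diff m (u w : F2vec m) : u != w -> hs (pauli R u) (pauli R w) = 0.
Proof.
move=> hne; rewrite hs_pauli.
have [j hj] : exists j, u j 0 != w j 0.
  apply/existsP; apply: contraR hne => /existsPn h.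
  apply/eqP/matrixP => j z; rewrite ord1; apply/eqP.
  by move: (h j); rewrite negbK.
have [i hi] := idx_cover j.
rewrite (bigD1 i) //= (_ : (_ && _) = false) ?mul0r //.
rewrite /pb /qb !F2_neq0_eq.
by case: hi => <-; rewrite (negbTE hj) ?andbF.
Qed.

Lemma pauli0 m : pauli R (0 : F2vec m) = op_id R m.
Proof.
apply: op_ext => x y; rewrite pauliE /op_id /pb /qb.
under eq_bigr => i _ do rewrite !mxE eqxx /= /Fs addbF expr0 mulr1.
case: (eqVneq x y) => [->|hne].
  by rewrite big1 // => i _; rewrite eqxx.
have [i hi] : exists i, x i != y i.
  apply/existsP; apply: contraR hne => /existsPn h.
  by apply/eqP/ffunP => i; move: (h i); rewrite negbK => /eqP.
by rewrite (bigD1 i) //= (negbTE hi) mul0r.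
Qed.

Lemma hs_opsum_in m p (f : 'I_p -> F2vec m) (be : 'I_p -> R[i]) t0 :
  injective f ->
  hs (pauli R (f t0)) (opsum (fun t => op_scale (be t) (pauli R (f t)))) = be t0 * 2 ^+ m.
Proof.
move=> hf; rewrite hs_sumr (bigD1 t0) //= hs_scaler hs_pauli_same big1 ?addr0 //.
move=> t ht; rewrite hs_scaler hs_pauli_diff ?mulr0 //.
by apply: contra ht => /eqP /hf ->.
Qed.

Lemma hs_opsum_out m p (f : 'I_p -> F2vec m) (be : 'I_p -> R[i]) v :
  (forall t, v != f t) ->
  hs (pauli R v) (opsum (fun t => op_scale (be t) (pauli R (f t)))) = 0.
Proof.
move=> hv; rewrite hs_sumr big1 // => t _.
by rewrite hs_scaler hs_pauli_diff ?mulr0.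
Qed.

End Pauli.



Section Embed.
Variables (R : rcfType) (a k r : nat).

Lemma prodC_reindex (G : 'I_(a + k + r) -> R[i]) :
  \prod_(s < a + k + r | siteC a k s) G s = \prod_(j < k) G (csite a k r j).
Proof.
rewrite big_split_ord /= [X in _ * X]big_pred0 ?mulr1; last first.
  by move=> i /=; rewrite /siteC /= ltnNge leq_addr andbF.
rewrite big_split_ord /= big_pred0 ?mul1r; last first.
  by move=> i /=; rewrite /siteC /= leqNgt ltn_ord.
by apply: eq_bigl => j; rewrite /siteC /= leq_addr ltn_add2l ltn_ord.
Qed.

Lemma shiftC_lt (j : 'I_(2 * k)) : (2 * a + j < 2 * (a + k + r))%N.
Proof. have := ltn_ord j; lia. Qed.

Definition shiftC (j : 'I_(2 * k)) : 'I_(2 * (a + k + r)) := Ordinal (shiftC_lt j).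

Definition res (w : F2vec (a + k + r)) : F2vec k := \col_j w (shiftC j) 0.

Lemma shiftC_p (j : 'I_k) : shiftC (pidx j) = pidx (csite a k r j).
Proof. apply: ord_inj => /=; lia. Qed.
Lemma shiftC_q (j : 'I_k) : shiftC (qidx j) = qidx (csite a k r j).
Proof. apply: ord_inj => /=; lia. Qed.

Lemma pauli_embed (w : F2vec (a + k + r)) x y :
  supported (siteC a k) w ->
  pauli R w x y = pauli R (res w) (restrC a k r x) (restrC a k r y) *
     \prod_(s < a + k + r | ~~ siteC a k s) (x s == y s)%:R.
Proof.
move=> hw; rewrite !pauliE (bigID (fun s : 'I_(a + k + r) => siteC a k s)) /=; congr (_ * _).
  rewrite prodC_reindex; apply: eq_bigr => j _.
  by rewrite /pb /qb !mxE shiftC_p shiftC_q !ffunE.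
apply: eq_bigr => s hs.
have hp : pb w s = false.
  rewrite /pb hw ?eqxx //=.
  by rewrite (_ : ((2 * s) %/ 2 = s)%N) //; lia.
have hq : qb w s = false.
  rewrite /qb hw ?eqxx //=. 
  by rewrite (_ : ((2 * s).+1 %/ 2 = s)%N) //; lia.
by rewrite hp hq /Fs addbF expr0 mulr1.
Qed.

Lemma res_inj (u v : F2vec (a + k + r)) : supported (siteC a k) u ->
  supported (siteC a k) v -> res u = res v -> u = v.
Proof.
move=> hu hv he; apply/matrixP => j z; rewrite ord1.
case hj: (siteC a k (j %/ 2)%N); last by rewrite hu ?hv ?hj.
move: hj; rewrite /siteC => /andP[h1 h2].
have hlt : (j - 2 * a < 2 * k)%N by lia.
have ej : shiftC (Ordinal hlt) = j by apply: ord_inj => /=; lia.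
have := congr1 (fun M : F2vec k => M (Ordinal hlt) 0) he.
by rewrite !mxE ej.
Qed.

Lemma res0 : res (0 : F2vec (a + k + r)) = 0.
Proof. by apply/matrixP => j z; rewrite !mxE. Qed.

End Embed.



Lemma unit_circle (R : realType) (l : R[i]) : l^* * l = 1 -> exists th : R, expi th = l.
Proof.
case: l => x y; rewrite /GRing.mul /= => h.
case: h => h1 _.
have hxy : x ^+ 2 + y ^+ 2 = 1 by rewrite -h1; ring.
have hx : -1 <= x <= 1 by apply/andP; split; nra.
have hin : x \in `[-1, 1] by rewrite in_itv /=.
have hs : sin (acos x) = `|y|.
  by rewrite sin_acos // (_ : 1 - x ^+ 2 = y ^+ 2) ?sqrtr_sqr //; lra.
case: (lerP 0 y) => hy.
  by exists (acos x); rewrite /expi acosK // hs ger0_norm.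
by exists (- acos x); rewrite /expi cosN sinN acosK // hs ltr0_norm // opprK.

Qed.

Unset Implicit Arguments. Set Strict Implicit.

Lemma sum_shift (V : nmodType) p (H : nat -> V) :
  H p = H 0%N -> \sum_(t < p) H t.+1 = \sum_(t < p) H t.
Proof.
case: p => [|p] h; first by rewrite !big_ord0.
by rewrite big_ord_recr big_ord_recl /= h addrC.
Qed.

Theorem lemma4 (R : realType) (a k r : nat)
  (ha : (0 < a)%N) (hk : (0 < k)%N) (hr : (0 < r)%N)
  (U : op R (a + k + r)) (W : F2mat (a + k + r))
  (hU : clifford_with U W)
  (hwall : left_wall a k W)
  (hG : exists g : F2vec (a + k + r), g != 0 /\ G_left a k W g /\ G_right a k W g) :
  exists (QC : op R k) (theta : R),
    ~ (exists c : R[i], QC = op_scale c (op_id R k)) /\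
    op_mul (op_mul U (embedC R a k r QC)) (op_adj U) = op_scale (expi theta) (embedC R a k r QC).
Proof.
case: hU => hUn [hW hind].
have [Wu hWT] := sympl_unit hW.
have [N [hN0 hN]] := W_order Wu.
case: hG => g [hg0 [hgl hgr]].
pose w t := W ^+ t *m g.
have wC : forall t, supported (siteC a k) (w t).
  by move=> t; apply: (orbitC hW hwall hN0 hN hgl hgr).
have wS : forall t, W *m w t = w t.+1 by move=> t; rewrite /w exprSmx.
have wD : forall i t, W ^+ i *m w t = w (i + t)%N by move=> i t; rewrite /w exprDmx.
have wnz : forall t, w t != 0.
  move=> t; apply: contra hg0 => /eqP h; apply/eqP.
  by apply: (cancel_pow (i := t) Wu); rewrite mulmx0.
have exP : exists p, (0 < p)%N && (w p == g).
  by exists N; rewrite hN0 /w hN; apply/eqP; exact: mul1mx.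
have [p /andP[hp0 /eqP hpg] hmin] := ex_minnP exP.
have wdist : forall s t, (s < p)%N -> (t < p)%N -> w s = w t -> s = t.
  suff H : forall s t, (s < t)%N -> (t < p)%N -> w s = w t -> False.
    move=> s t hs ht he; case: (ltngtP s t) => // h.
    - by case: (H s t h ht he).
    - by case: (H t s h hs (esym he)).
  move=> s t hst htp he.
  have : (p <= s + (p - t))%N.
    apply: hmin; apply/andP; split; first by lia.
    by rewrite (addnC s) -wD he wD subnK ?hpg ?eqxx // ltnW.
  lia.
pose n := (a + k + r)%N.
pose cf (b : F2vec n) : R[i] :=
  hs (pauli R (W *m b)) (op_mul (op_mul U (pauli R b)) (op_adj U)) / 2 ^+ n.
have hcf : forall b, op_mul (op_mul U (pauli R b)) (op_adj U) = op_scale (cf b) (pauli R (W *m b)).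
  move=> b; have [c hc] := hind b.
  by rewrite /cf hc hs_scaler hs_pauli_same mulfK ?two_pow_neq0.
have cf0 : forall b, cf b != 0.
  move=> b; apply/eqP => h0.
  have := hs_unitary (pauli R b) (pauli R b) hUn.
  rewrite hcf h0 hs_scalel hs_scaler hs_pauli_same rmorph0 !mul0r => /eqP.
  by rewrite eq_sym (negbTE (two_pow_neq0 _ _)).
pose c t := cf (w t).
pose Pi := \prod_(t < p) c t.
have Pi0 : Pi != 0 by apply/prodf_neq0 => t _; exact: cf0.
pose lam := p.-root Pi.
have hlam : lam ^+ p = Pi by rewrite /lam rootCK.
have lam0 : lam != 0.
  apply: contra Pi0 => /eqP h; rewrite -hlam h expr0n.
  by rewrite (negbTE (lt0n_neq0 hp0)).
pose beta (t : nat) := (\prod_(s < t) c s) / lam ^+ t.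
have bstep : forall t, beta t * c t = lam * beta t.+1.
  move=> t; rewrite /beta big_ord_recr /= exprS.
  field; apply/andP; split => //; exact: expf_neq0.
have b0 : beta 0%N = 1 by rewrite /beta big_ord0 expr0 divr1.
have bp : beta p = 1 by rewrite /beta -/Pi hlam divff.
have w0 : w 0%N = g by rewrite /w expr0mx.
pose Qn := opsum (fun t : 'I_p => op_scale (beta t) (pauli R (w t))).
pose QC := opsum (fun t : 'I_p => op_scale (beta t) (pauli R (@res a k r (w t)))).
have hemb : embedC R a k r QC = Qn.
  apply: op_ext => x y; rewrite /embedC /QC /Qn /opsum /op_scale big_distrl /=.
  by apply: eq_bigr => t _; rewrite -mulrA -pauli_embed.
have hconj : op_mul (op_mul U Qn) (op_adj U) = op_scale lam Qn.
  apply: op_ext => x y; rewrite /Qn op_mul_sumr op_mul_suml /opsum /op_scale.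
  under eq_bigr => t _ do rewrite op_mul_scaler op_mul_scalel hcf wS /op_scale mulrA bstep -mulrA.
  rewrite -big_distrr /=; congr (_ * _).
  apply: (@sum_shift _ p (fun t => beta t * pauli R (w t) x y)).
  by rewrite bp b0 hpg w0.
have winj : injective (fun t : 'I_p => w t).
  by move=> s t /= h; apply: ord_inj; apply: wdist.
have hQn : hs (pauli R (w (Ordinal hp0))) Qn = 2 ^+ n.
  transitivity (beta (Ordinal hp0) * 2 ^+ n); first exact: (hs_opsum_in _ _ winj).
  by rewrite /= b0 mul1r.
have hQQ : hs Qn Qn != 0.
  apply/eqP => h0; have h1 := hs_self0 h0.
  move: hQn; rewrite /hs big1 => [/eqP|x _]; last first.
    by rewrite big1 // => y _; rewrite h1 mulr0.
  by rewrite eq_sym (negbTE (two_pow_neq0 _ _)).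
have hll : lam^* * lam = 1.
  have := hs_unitary Qn Qn hUn; rewrite hconj hs_scalel hs_scaler mulrA => h.
  by apply: (mulIf hQQ); rewrite h mul1r.
have [th hth] := unit_circle hll.
exists QC, th; split; last by rewrite hemb hconj hth.
move=> [cc hcc].
have hres : forall t : 'I_p, @res a k r (w t) != 0.
  move=> t; apply/eqP => h; move/eqP: (wnz t); apply.
  apply: (@res_inj a k r) => //; [exact: supp0 | by rewrite h res0].
have rinj : injective (fun t : 'I_p => @res a k r (w t)).
  move=> s t /= h; apply: ord_inj; apply: wdist => //.
  exact: (@res_inj a k r _ _ (wC s) (wC t) h).
have h1 : hs (pauli R 0) QC = 0.
  by apply: hs_opsum_out => t; rewrite eq_sym; exact: hres t.
rewrite hcc pauli0 hs_scaler -pauli0 hs_pauli_same in h1.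
have hcc0 : cc = 0.
  by move/eqP: h1; rewrite mulf_eq0 (negbTE (two_pow_neq0 _ _)) orbF => /eqP.
have h2 : hs (pauli R (@res a k r (w (Ordinal hp0)))) QC = 2 ^+ k.
  transitivity (beta (Ordinal hp0) * 2 ^+ k); first exact: (hs_opsum_in _ _ rinj).
  by rewrite /= b0 mul1r.
move: h2; rewrite hcc hcc0 hs_scaler mul0r => /eqP.
by rewrite eq_sym (negbTE (two_pow_neq0 _ _)).
Qed.
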